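(* Let $A$ be a finite set of options containing a default option $0$, and consider $V\ge1$ votes, each a truncated ranking with possible ties, interpreted as in the context, with Llull matrix $v$. Let $W$ be the set of path-revised approval choices of $v$. If $x,y\in A$, $x$ dominates $y$ in the sense of Pareto, and $y\in W$, then $x\in W$.
   Context: A truncated ranking with ties is a weak order on a subset of $A$ (the ranked options); for ranked options, $x$ is preferred to $y$ if strictly above, and ranked equally if tied; every ranked option is preferred to every unranked option; two unranked options are not compared. Llull matrix: $v_{xy}=(\#\{\text{votes preferring }x\text{ to }y\}+\tfrac12\#\{\text{votes ranking }x,y\text{ equally}\})/V$. Path scores: $v^*_{xy}=\max\min(v_{x_0x_1},\dots,v_{x_{m-1}x_m})$ over all paths $x_0\dots x_m$ ($m\ge1$, $x_0=x$, $x_m=y$, $x_i$ pairwise distinct). For $z\in A$, $D(z)=v^*_{z0}-v^*_{0z}$ if $z\ne0$ and $D(0)=0$; $x$ is a path-revised approval choice if $D(x)\ge D(z)$ for all $z\ne x$. $x$ dominates $y$ in the sense of Pareto if every vote either prefers $x$ to $y$ or ranks them equally, and at least one vote prefers $x$ to $y$. *)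

(* Defs.v *)
From mathcomp Require Import all_boot all_order all_algebra.
Set Implicit Arguments. Unset Strict Implicit. Unset Printing Implicit Defensive.
Import Order.TTheory GRing.Theory Num.Theory.
Local Open Scope ring_scope.

(* A truncated ranking with ties on options A: a rank function.
   [r x = Some k]: x is ranked at level k (smaller = better; equal levels = tie);
   [r x = None]: x is unranked.  Every weak order on a subset of A arises this way. *)
Definition ballot (A : finType) := A -> option nat.

Definition prefers (A : finType) (r : ballot A) (x y : A) : bool :=
  match r x, r y with
  | Some i, Some j => (i < j)%N
  | Some _, None => true
  | _, _ => false
  end.

Definition ties (A : finType) (r : ballot A) (x y : A) : bool :=
  match r x, r y with
  | Some i, Some j => i == j
  | _, _ => false
  end.

Definition llull (A : finType) (V : nat) (b : 'I_V -> ballot A) (x y : A) : rat :=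
  ((#|[set i | prefers (b i) x y]|)%:R + (#|[set i | ties (b i) x y]|)%:R / 2%:R)
    / V%:R.

(* x :: t is a path x = x_0, ..., x_m = y with m >= 1 and pairwise distinct x_i *)
Definition is_path (A : finType) (x y : A) (t : seq A) : bool :=
  [&& (0 < size t)%N, uniq (x :: t) & last x t == y].

(* min of v over the edges of the path x :: t (t nonempty, so the default 1
   never matters since all entries of v lie in [0,1]) *)
Definition path_min (A : finType) (v : A -> A -> rat) (x : A) (t : seq A) : rat :=
  foldr Num.min 1 [seq v e.1 e.2 | e <- zip (x :: t) t].

(* path score v*_{xy}: max over all simple paths (such a path has at most
   #|A| vertices, hence t has length < #|A|).  Default 0 only matters when no
   path exists (x = y), which is never used. *)
Definition path_score (A : finType) (v : A -> A -> rat) (x y : A) : rat :=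
  \big[Num.max/0]_(n < #|A|)
    \big[Num.max/0]_(t : n.-tuple A | is_path x y t) path_min v x t.

Definition Dscore (A : finType) (o : A) (v : A -> A -> rat) (z : A) : rat :=
  if z == o then 0 else path_score v z o - path_score v o z.

Definition pra_choices (A : finType) (o : A) (v : A -> A -> rat) : {set A} :=
  [set x | [forall z, (z != x) ==> (Dscore o v z <= Dscore o v x)]].

Definition pareto_dom (A : finType) (V : nat) (b : 'I_V -> ballot A) (x y : A) : Prop :=
  (forall i, prefers (b i) x y || ties (b i) x y) /\ (exists i, prefers (b i) x y).

(* Main.v *)
Require Import Defs.
From mathcomp Require Import all_boot all_order all_algebra.
From mathcomp Require Import zify ring lra.
Set Implicit Arguments. Unset Strict Implicit. Unset Printing Implicit Defensive.
Import Order.TTheory GRing.Theory Num.Theory.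
Local Open Scope ring_scope.

Section P.
Variable A : finType.
Implicit Types (v : A -> A -> rat).

Lemma pm_cons v c d t : path_min v c (d::t) = Num.min (v c d) (path_min v d t).
Proof. by []. Qed.

Lemma pm_le1 v c t : path_min v c t <= 1.
Proof. elim: t c => [|d t IH] c //; by rewrite pm_cons ge_min IH orbT. Qed.

Lemma pm_path v m c t : m <= path_min v c t -> path (fun a b => m <= v a b) c t.
Proof. elim: t c => //= d t IH c; rewrite pm_cons le_min => /andP[-> /IH] //. Qed.

Lemma path_pm v m c t : m <= 1 -> path (fun a b => m <= v a b) c t -> m <= path_min v c t.
Proof. move=> m1; elim: t c => //= d t IH c /andP[h1 h2]; by rewrite pm_cons le_min h1 IH. Qed.

Lemma uniq_path v m c t : uniq (c::t) ->
  path (fun a b => (a==b) || (m <= v a b)) c t -> path (fun a b => m <= v a b) c t.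
Proof.
elim: t c => //= d t IH c /andP[]; rewrite inE negb_or => /andP[cd _] ut /andP[ecd pt].
rewrite (negbTE cd) /= in ecd; by rewrite ecd IH.
Qed.

Lemma shorten_ex (T : eqType) (e : rel T) (x : T) p : path e x p ->
  exists p', [/\ path e x p', uniq (x::p') & last x p' = last x p].
Proof. by case/shortenP => p' ? ? _; exists p'. Qed.

Lemma ps_ge0 v a b : 0 <= path_score v a b.
Proof. exact: bigmax_ge_id. Qed.

Lemma ps_mono v (f : A -> A) a b :
 f a != f b ->
 (forall c d, c != d -> d != a -> c != b -> (f c == f d) || (v c d <= v (f c) (f d))) ->
 path_score v a b <= path_score v (f a) (f b).
Proof.
move=> fab H; rewrite {1}/path_score.
apply: bigmax_le => [|n _]; first exact: ps_ge0.
apply: bigmax_le => [|t pt]; first exact: ps_ge0.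
set m := path_min v a t.
move/and3P: pt => [tpos ut /eqP lt].
have pe : path (fun c d => (c==d)||(m <= v c d)) (f a) (map f t).
  have pm := pm_path (lexx m).
  move/(pathP a): pm => pm.
  apply/(pathP (f a)) => i; rewrite size_map => hi.
  rewrite -map_cons !(nth_map a) //=; last by rewrite ltnS ltnW.
  have ei := pm i hi.
  have hd : nth a t i = nth a (a :: t) i.+1 by [].
  have cd : nth a (a :: t) i != nth a t i.
    by rewrite hd nth_uniq //= ?ltnS ?(ltnW hi) // neq_ltn ltnSn.
  have da : nth a t i != a.
    apply/eqP => E; move: ut; rewrite /= -E mem_nth //.
  have cb : nth a (a :: t) i != b.
    rewrite -lt -[last a t]/(last a (a::t)) -nth_last /=.
    by rewrite nth_uniq //= ?ltnS ?(ltnW hi) // neq_ltn hi.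
  have := H _ _ cd da cb; case/orP => [->//|h]; by rewrite (le_trans ei h) orbT.
have [p' [pp' up' lp']] := shorten_ex pe.
rewrite last_map lt in lp'.
have hs : (size p' < #|A|)%N.
  by have := max_card (mem (f a :: p')); rewrite (card_uniqP up').
have sp : (0 < size p')%N.
  by case: p' {pp' up' hs} lp' => //= E; rewrite E eqxx in fab.
apply: (bigmax_sup (Ordinal hs)) => //.
apply: (bigmax_sup (@Tuple (size p') A p' (eqxx _))).
  by rewrite /is_path sp up' lp' eqxx.
by apply: path_pm; [apply: pm_le1 | apply: uniq_path up' pp'].
Qed.

Definition cv (r : ballot A) a z : rat := (prefers r a z)%:R + (ties r a z)%:R / 2%:R.

Lemma cv_mono (r : ballot A) x y z : prefers r x y || ties r x y ->
  cv r y z <= cv r x z /\ cv r z x <= cv r z y.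
Proof.
rewrite /cv /prefers /ties; case: (r x) => [i|]; case: (r y) => [j|];
  case: (r z) => [l|] //= H.
- have {H} H : (i <= j)%N by case/orP: H => [/ltnW|/eqP->].
  case: (ltngtP i l) => Hil; case: (ltngtP j l) => Hjl; rewrite /=;
    try (exfalso; lia); split; lra.
all: try (case: (ltngtP i l) => Hil /=); split; lra.
Qed.

Lemma llullE V (b : 'I_V -> ballot A) a z :
  llull b a z = (\sum_i cv (b i) a z) / V%:R.
Proof.
have cardE (P : pred 'I_V) : (#|[set i | P i]|%:R : rat) = \sum_i (P i)%:R.
  rewrite -sum1_card natr_sum big_mkcond /=; apply: eq_bigr => i _.
  by rewrite inE; case: (P i).
rewrite /llull !cardE; congr (_ / _); rewrite /cv big_split /= mulr_suml //.
Qed.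

Lemma llull_mono V (b : 'I_V -> ballot A) x y :
  (forall i, prefers (b i) x y || ties (b i) x y) ->
  forall z, llull b y z <= llull b x z /\ llull b z x <= llull b z y.
Proof.
move=> H z; rewrite !llullE; split; apply: ler_wpM2r;
  rewrite ?invr_ge0 ?ler0n //; apply: ler_sum => i _; have [h1 h2] := cv_mono z (H i);
  done.
Qed.
End P.

Theorem corollary4p3 (A : finType) (o : A) (V : nat) (b : 'I_V -> ballot A)
    (x y : A) :
  (0 < V)%N -> pareto_dom b x y ->
  y \in pra_choices o (llull b) -> x \in pra_choices o (llull b).
Proof.
move=> _ [Hp [i0 Hi0]] yW.
have xy : x != y.
  apply/eqP=> E; subst; move: Hi0; rewrite /prefers; case: (b i0 y) => //= k.
  by rewrite ltnn.
set v := llull b.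
have M := llull_mono Hp.
have swap : path_score v y x <= path_score v x y.
  pose f c := if c == x then y else if c == y then x else c.
  have fy : f y = x by rewrite /f eq_sym (negbTE xy) eqxx.
  have fx : f x = y by rewrite /f eqxx.
  suff: path_score v y x <= path_score v (f y) (f x) by rewrite fy fx.
  apply: ps_mono; first by rewrite fy fx.
  move=> c d cd dy cx; rewrite /f (negbTE cx) (negbTE dy).
  case: (eqVneq c y) => [->|cy]; case: (eqVneq d x) => [->|dx].
  - by apply/orP; right; apply: le_trans (proj2 (M y)) (proj1 (M y)).
  - by rewrite (proj1 (M d)) orbT.
  - by rewrite (proj2 (M c)) orbT.
  - by rewrite lexx orbT.
have Dxy : Dscore o v y <= Dscore o v x.
  rewrite /Dscore; case: (eqVneq x o) => [xo|xo]; case: (eqVneq y o) => [yo|yo].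
  - by rewrite lexx.
  - by rewrite -xo subr_le0.
  - by rewrite -yo subr_ge0.
  - apply: lerB.
    + pose g c := if c == y then x else c.
      have gy : g y = x by rewrite /g eqxx.
      have go : g o = o by rewrite /g eq_sym (negbTE yo).
      suff: path_score v y o <= path_score v (g y) (g o) by rewrite gy go.
      apply: ps_mono; first by rewrite gy go.
      move=> c d cd dy _; rewrite /g (negbTE dy).
      case: (eqVneq c y) => [->|cy]; last by rewrite lexx orbT.
      rewrite ?eqxx; case: (eqVneq x d) => [->|xd]; first by rewrite ?eqxx.
      by rewrite (proj1 (M d)) orbT.
    + pose h c := if c == x then y else c.
      have hx : h x = y by rewrite /h eqxx.
      have ho : h o = o by rewrite /h eq_sym (negbTE xo).
      suff: path_score v o x <= path_score v (h o) (h x) by rewrite ho hx.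
      apply: ps_mono; first by rewrite ho hx eq_sym.
      move=> c d cd _ cx; rewrite /h (negbTE cx).
      case: (eqVneq d x) => [->|dx]; last by rewrite lexx orbT.
      rewrite ?eqxx; case: (eqVneq c y) => [->|cy]; first by rewrite ?eqxx.
      by rewrite (proj2 (M c)) orbT.
move: yW; rewrite !inE => /forallP yW; apply/forallP => z; apply/implyP => zx.
case: (eqVneq z y) => [->//|zy].
by apply: le_trans Dxy; have := yW z; rewrite zy.
Qed.
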